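(* Let $N\ge1$, $k>0$, $\mathcal{E}>0$, $\gamma=\mathcal{E}/k$. Suppose $v_1,\dots,v_N$ are pairwise distinct nonzero numbers satisfying $$\frac{\mathcal{E}(1-v_k^2)+k(1-N)v_k}{k v_k^2}=\sum_{j\neq k}^{N}\frac{2}{v_j-v_k},\qquad k=1,\dots,N,$$ and put $E=-\frac{kN^2}{8}+\frac{\mathcal{E}}{2}\sum_{j=1}^N v_j$. Define $$\psi(x)=\exp(-\gamma\cosh x)\prod_{j=1}^N\big(e^{x/2}-v_je^{-x/2}\big),\qquad V(x)=\gamma^2\sinh^2x-(N+1)\gamma\cosh x.$$ Then $-\psi''(x)+V(x)\psi(x)=\frac{2E}{k}\,\psi(x)$ for all real $x$. *)

(* Defs.v *)
From Stdlib Require Import Reals.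
From Coquelicot Require Import Coquelicot.
Open Scope R_scope.

Fixpoint csum (n : nat) (f : nat -> C) : C :=
  match n with O => RtoC 0 | S m => Cplus (csum m f) (f m) end.
Fixpoint cprod (n : nat) (f : nat -> C) : C :=
  match n with O => RtoC 1 | S m => Cmult (cprod m f) (f m) end.

Definition bethe_eqs (N : nat) (k Ecal : R) (v : nat -> C) : Prop :=
  forall i, (i < N)%nat ->
    Cdiv (Cplus (Cmult (RtoC Ecal) (Cminus (RtoC 1) (Cmult (v i) (v i))))
                (Cmult (RtoC (k * (1 - INR N))) (v i)))
         (Cmult (RtoC k) (Cmult (v i) (v i)))
    = csum N (fun j => if Nat.eqb j i then RtoC 0
                       else Cdiv (RtoC 2) (Cminus (v j) (v i))).

Definition energy (N : nat) (k Ecal : R) (v : nat -> C) : C :=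
  Cplus (RtoC (- (k * INR N ^ 2) / 8)) (Cmult (RtoC (Ecal / 2)) (csum N v)).

Definition psi (N : nat) (gam : R) (v : nat -> C) (x : R) : C :=
  Cmult (RtoC (exp (- gam * cosh x)))
        (cprod N (fun j => Cminus (RtoC (exp (x / 2))) (Cmult (v j) (RtoC (exp (- x / 2)))))).

Definition pot (N : nat) (gam : R) (x : R) : R :=
  gam ^ 2 * (sinh x) ^ 2 - (INR N + 1) * gam * cosh x.

(* Main.v *)
Require Import Defs.
From Stdlib Require Import Reals Lra.
From Coquelicot Require Import Coquelicot.
Open Scope R_scope.

Lemma is_derive_eqv (f : R -> C) x l l' : is_derive f x l -> l = l' -> is_derive f x l'.
Proof. intros H ->; exact H. Qed.

Lemma is_derive_pairC (f1 f2 : R -> R) x l1 l2 :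
  is_derive f1 x l1 -> is_derive f2 x l2 ->
  is_derive (fun t => (f1 t, f2 t) : C) x ((l1, l2) : C).
Proof.
  intros H1 H2.
  assert (E1 := @is_derive_scal_l R_AbsRing C_R_NormedModule f1 x l1 (RtoC 1) H1).
  assert (E2 := @is_derive_scal_l R_AbsRing C_R_NormedModule f2 x l2 ((0,1) : C) H2).
  assert (E := is_derive_plus _ _ _ _ _ E1 E2).
  eapply is_derive_ext; [ | eapply is_derive_eqv; [exact E | ]].
  - intros t; simpl. unfold plus, scal; simpl. unfold prod_plus, prod_scal; simpl.
    apply injective_projections; simpl.
    + change (Rplus (Rmult (f1 t) 1) (Rmult (f2 t) 0) = f1 t); ring.
    + change (Rplus (Rmult (f1 t) 0) (Rmult (f2 t) 1) = f2 t); ring.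
  - unfold plus, scal; simpl. unfold prod_plus, prod_scal; simpl.
    apply injective_projections; simpl.
    + change (Rplus (Rmult l1 1) (Rmult l2 0) = l1); ring.
    + change (Rplus (Rmult l1 0) (Rmult l2 1) = l2); ring.
Qed.

Lemma is_derive_fstC (f : R -> C) x l : is_derive f x l -> is_derive (fun t => fst (f t)) x (fst l).
Proof.
  intros H. unfold is_derive in *.
  assert (L : @filterdiff R_AbsRing C_R_NormedModule R_NormedModule (fun p : C => fst p) (filtermap f (locally x)) (fun p : C => fst p)) by (apply filterdiff_linear; apply (@is_linear_fst R_AbsRing R_NormedModule R_NormedModule)).
  eapply filterdiff_ext_lin. apply (filterdiff_comp f _ _ _ H L).
  intros y; reflexivity.
Qed.

Lemma is_derive_sndC (f : R -> C) x l : is_derive f x l -> is_derive (fun t => snd (f t)) x (snd l).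
Proof.
  intros H. unfold is_derive in *.
  assert (L : @filterdiff R_AbsRing C_R_NormedModule R_NormedModule (fun p : C => snd p) (filtermap f (locally x)) (fun p : C => snd p)) by (apply filterdiff_linear; apply (@is_linear_snd R_AbsRing R_NormedModule R_NormedModule)).
  eapply filterdiff_ext_lin. apply (filterdiff_comp f _ _ _ H L).
  intros y; reflexivity.
Qed.

Lemma is_derive_Rmult (f g : R -> R) x lf lg : is_derive f x lf -> is_derive g x lg ->
  is_derive (fun t => f t * g t) x (lf * g x + f x * lg).
Proof. intros Hf Hg. apply is_derive_Reals. apply derivable_pt_lim_mult; apply is_derive_Reals; assumption. Qed.

Lemma is_derive_Rminus (f g : R -> R) x lf lg : is_derive f x lf -> is_derive g x lg ->
  is_derive (fun t => f t - g t) x (lf - lg).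
Proof. intros Hf Hg. apply is_derive_Reals. apply derivable_pt_lim_minus; apply is_derive_Reals; assumption. Qed.

Lemma is_derive_Rplus (f g : R -> R) x lf lg : is_derive f x lf -> is_derive g x lg ->
  is_derive (fun t => f t + g t) x (lf + lg).
Proof. intros Hf Hg. apply is_derive_Reals. apply derivable_pt_lim_plus; apply is_derive_Reals; assumption. Qed.

Lemma is_derive_Cmult (f g : R -> C) x lf lg : is_derive f x lf -> is_derive g x lg ->
  is_derive (fun t => Cmult (f t) (g t)) x (Cplus (Cmult lf (g x)) (Cmult (f x) lg)).
Proof.
  intros Hf Hg.
  assert (F1 := is_derive_fstC _ _ _ Hf). assert (F2 := is_derive_sndC _ _ _ Hf).
  assert (G1 := is_derive_fstC _ _ _ Hg). assert (G2 := is_derive_sndC _ _ _ Hg).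
  eapply is_derive_ext; [ | eapply is_derive_eqv; [apply is_derive_pairC;
     [apply (is_derive_Rminus _ _ _ _ _ (is_derive_Rmult _ _ _ _ _ F1 G1) (is_derive_Rmult _ _ _ _ _ F2 G2))
     |apply (is_derive_Rplus _ _ _ _ _ (is_derive_Rmult _ _ _ _ _ F1 G2) (is_derive_Rmult _ _ _ _ _ F2 G1))] | ]].
  - intros t. reflexivity.
  - destruct lf, lg, (f x), (g x). unfold Cmult, Cplus; simpl. apply injective_projections; simpl; ring.
Qed.

Lemma is_derive_Cplus (f g : R -> C) x lf lg : is_derive f x lf -> is_derive g x lg ->
  is_derive (fun t => Cplus (f t) (g t)) x (Cplus lf lg).
Proof. intros Hf Hg. exact (is_derive_plus _ _ _ _ _ Hf Hg). Qed.

Lemma is_derive_RtoC (f : R -> R) x l : is_derive f x l -> is_derive (fun t => RtoC (f t)) x (RtoC l).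
Proof. intros H. apply is_derive_pairC; [exact H | apply (@is_derive_const R_AbsRing R_NormedModule 0 x)]. Qed.

Lemma is_derive_Cconst (c : C) x : is_derive (fun _ : R => c) x (RtoC 0).
Proof. apply (@is_derive_const R_AbsRing C_R_NormedModule c x). Qed.

Close Scope R_scope.
From HB Require Import structures.
From mathcomp Require Import all_boot all_algebra.
Open Scope R_scope.

Definition Af (N : nat) (gam x : R) : R := exp (- gam * ((exp x + exp (- x)) / 2) - INR N * (x / 2)).
Definition bf (N : nat) (gam x : R) : R := - gam * ((exp x - exp (- x)) / 2) - INR N / 2.
Definition bpf (gam x : R) : R := - gam * ((exp x + exp (- x)) / 2).
Definition A1f N gam x := Af N gam x * bf N gam x.
Definition A2f N gam x := Af N gam x * (bf N gam x * bf N gam x + bpf gam x).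

Lemma Af_der N gam x : is_derive (Af N gam) x (A1f N gam x).
Proof. unfold A1f, Af, bf. auto_derive. auto. unfold Rdiv, Rminus. ring. Qed.

Lemma A1f_der N gam x : is_derive (A1f N gam) x (A2f N gam x).
Proof. unfold A1f, A2f, Af, bf, bpf. auto_derive. auto. unfold Rdiv, Rminus. ring. Qed.

Lemma exp_half x : exp (x / 2) = exp (- x / 2) * exp x.
Proof. rewrite -exp_plus. f_equal. field. Qed.
Lemma exp_INR n y : exp (INR n * y) = exp y ^ n.
Proof. elim: n => [|n IH]. by rewrite /= Rmult_0_l exp_0. rewrite S_INR /= -IH -exp_plus. f_equal. ring. Qed.
Lemma Af_split N gam x : Af N gam x = exp (- gam * cosh x) * exp (- x / 2) ^ N.
Proof. rewrite /Af -exp_INR -exp_plus. f_equal. rewrite /cosh. field. Qed.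

Close Scope R_scope.
From mathcomp Require Import Rstruct.
From mathcomp Require Import ring.
Set Implicit Arguments. Unset Strict Implicit. Unset Printing Implicit Defensive.
Import GRing.Theory.

HB.instance Definition _ := Choice.copy C (R * R)%type.

Lemma C_addNr : left_inverse (RtoC 0) Copp Cplus.
Proof. move=> x; rewrite Cplus_comm; apply Cplus_opp_r. Qed.

HB.instance Definition _ := GRing.isZmodule.Build C
  Cplus_assoc Cplus_comm Cplus_0_l C_addNr.

Lemma C_one_neq0 : (RtoC 1) != (RtoC 0 : C).
Proof. apply/eqP => H; apply R1_neq_R0; exact: (f_equal fst H). Qed.

HB.instance Definition _ := GRing.Zmodule_isComNzRing.Build C
  Cmult_assoc Cmult_comm Cmult_1_l Cmult_plus_distr_r C_one_neq0.

Lemma C_mulVf : forall x : C, x != 0%R -> (Cinv x * x)%R = 1%R.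
Proof. move=> x /eqP Hx; rewrite /GRing.mul /=. rewrite Cmult_comm. apply Cinv_r. done. Qed.

Lemma C_inv0 : Cinv (RtoC 0) = RtoC 0.
Proof. unfold Cinv, RtoC; simpl. unfold Rdiv. rewrite Ropp_0 !Rmult_0_l. reflexivity. Qed.

HB.instance Definition _ := GRing.ComNzRing_isField.Build C C_mulVf C_inv0.

Local Open Scope ring_scope.

Definition th (p : {poly C}) : {poly C} := 'X * p^`().

Lemma coef_th p j : (th p)`_j = p`_j *+ j.
Proof. by rewrite /th coefXM coef_deriv; case: j => [|j] //=; rewrite mulr0n. Qed.

Definition Qp (N : nat) (v : nat -> C) : {poly C} := \prod_(j < N) ('X - (v j)%:P).
Definition Ssum (N : nat) (v : nat -> C) : C := \sum_(j < N) v j.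

Definition Wp (N : nat) (g : C) (v : nat -> C) : {poly C} :=
  let Q := Qp N v in
  - th (th Q) + (th Q) *+ N + g%:P * ('X * th Q) - g%:P * Q^`()
  - (g%:P * ('X * Q)) *+ N - (g * Ssum N v)%:P * Q.

Lemma Qp_monic N v : Qp N v \is monic.
Proof. exact: monic_prod_XsubC. Qed.

Lemma Qp_size N v : size (Qp N v) = N.+1.
Proof. by rewrite /Qp -big_enum size_prod_XsubC size_enum_ord. Qed.

Lemma Qp_lead N v : (Qp N v)`_N = 1.
Proof. by have /monicP := Qp_monic N v; rewrite /lead_coef Qp_size. Qed.

Lemma Qp_high N v j : (N < j)%N -> (Qp N v)`_j = 0.
Proof. by move=> H; rewrite nth_default // Qp_size. Qed.

Lemma Qp_sub n v : (Qp n.+1 v)`_n = - Ssum n.+1 v.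
Proof.
elim: n => [|n IH].
  by rewrite /Qp /Ssum !big_ord1 coefB coefX coefC /= sub0r.
rewrite /Qp /Ssum big_ord_recr /= mulrBr coefB coefMX coefMC /=.
rewrite -/(Qp n.+1 v) IH Qp_lead big_ord_recr /= mul1r opprD.
by rewrite /Ssum.
Qed.

Lemma Wp_size N g v : (1 <= N)%N -> (size (Wp N g v) <= N)%N.
Proof.
case: N => [//|n] _.
apply/leq_sizeP => j Hj.
rewrite /Wp !(coefB, coefD, coefN, coefMn, coefCM, coef_th, coefXM).
case: j Hj => [//|j] Hj.
rewrite /= coef_deriv.
have H0 : forall i, (n.+1 < i)%N -> (Qp n.+1 v)`_i = 0 by move=> i; apply: Qp_high.
have L := Qp_lead n.+1 v. have S1 := Qp_sub n v.
move: (Qp n.+1 v) H0 L S1 => Q H0 L S1.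
move: Hj; rewrite ltnS leq_eqVlt => /orP[/eqP <-|Hj].
  rewrite L S1 (H0 n.+2) //.
  ring.
move: Hj; rewrite leq_eqVlt => /orP[/eqP <-|Hj].
  rewrite L (H0 n.+2) // (H0 n.+3) //.
  ring.
have h1 : (n.+1 < j.+1)%N by apply: (ltn_trans Hj).
have h2 : (n.+1 < j.+2)%N by apply: (ltn_trans h1).
rewrite (H0 j Hj) (H0 j.+1 h1) (H0 j.+2 h2).
ring.
Qed.

Lemma logder (I : Type) (r : seq I) (P : pred I) (a : I -> C) (z : C) :
  (forall j, P j -> z != a j) ->
  (\prod_(j <- r | P j) ('X - (a j)%:P))^`().[z] =
  (\prod_(j <- r | P j) ('X - (a j)%:P)).[z] * \sum_(j <- r | P j) (z - a j)^-1.
Proof.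
move=> Hz; elim: r => [|x r IH].
  by rewrite !big_nil derivC !hornerE ?mul0r ?mulr0.
rewrite !big_cons; case Px: (P x) => //.
rewrite derivM derivXsubC hornerD !hornerM IH hornerXsubC hornerE.
have Hx : z - a x != 0 by rewrite subr_eq0; apply: Hz.
field. done.
Qed.

Close Scope ring_scope.
Open Scope R_scope.
Lemma RtoC_addE (a b : R) : RtoC (a + b) = (RtoC a + RtoC b)%R.
Proof. by rewrite RtoC_plus. Qed.
Lemma RtoC_mulE (a b : R) : RtoC (a * b) = (RtoC a * RtoC b)%R.
Proof. by rewrite RtoC_mult. Qed.
Lemma RtoC_oppE (a : R) : RtoC (- a) = (- RtoC a)%R.
Proof. by rewrite RtoC_opp. Qed.
Lemma RtoC_subE (a b : R) : RtoC (a - b) = (RtoC a - RtoC b)%R.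
Proof. by rewrite RtoC_minus. Qed.
Lemma RtoC_0E : RtoC 0 = 0%R. Proof. by []. Qed.
Lemma RtoC_1E : RtoC 1 = 1%R. Proof. by []. Qed.
Lemma RtoC_natE n : RtoC (INR n) = (n%:R)%R.
Proof.
elim: n => [//|n IH]; rewrite S_INR RtoC_addE IH GRing.mulrS GRing.addrC //.
Qed.
Lemma RtoC_invE (a : R) : a <> 0 -> RtoC (/ a) = ((RtoC a)^-1)%R.
Proof. move=> Ha. rewrite RtoC_inv //. Qed.

Lemma natC_neq0 n : (n.+1%:R : C)%R != 0%R.
Proof.
rewrite -RtoC_natE; apply/eqP => H.
have H1 : INR n.+1 = 0 by exact: (f_equal fst H).
have := pos_INR n. rewrite S_INR in H1. move=> ?; lra.
Qed.
Close Scope R_scope.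
Open Scope ring_scope.

Lemma hth p z : (th p).[z] = z * p^`().[z].
Proof. by rewrite /th hornerM hornerX. Qed.

Lemma hthth p z : (th (th p)).[z] = z * (p^`().[z] + z * p^`()^`().[z]).
Proof. by rewrite hth /th derivM derivX mul1r hornerD hornerM hornerX. Qed.

Lemma Wp_horner N g v z : (Wp N g v).[z] =
  let Q := Qp N v in
  - (z * (Q^`().[z] + z * Q^`()^`().[z])) + (z * Q^`().[z]) *+ N
  + g * (z * (z * Q^`().[z])) - g * Q^`().[z] - (g * (z * Q.[z])) *+ N
  - g * Ssum N v * Q.[z].
Proof.
rewrite /Wp /= !(hornerD, hornerN, hornerMn) hthth. rewrite (@hth (Qp N v) z).
by rewrite !(hornerM, hornerC, hornerX) ?hth.
Qed.

Lemma d1 c (Rp : {poly C}) : (('X - c%:P) * Rp)^`() = Rp + ('X - c%:P) * Rp^`().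
Proof. by rewrite derivM derivXsubC mul1r. Qed.
Lemma d2 c (Rp : {poly C}) : (('X - c%:P) * Rp)^`()^`() = Rp^`() *+ 2 + ('X - c%:P) * Rp^`()^`().
Proof. by rewrite d1 derivD d1 mulr2n addrA. Qed.

Lemma Wp_root N g v
  (Hdist : forall i j, (i < N)%N -> (j < N)%N -> i <> j -> v i <> v j)
  (Hnz : forall i, (i < N)%N -> v i <> 0)
  (HB : forall i (Hi : (i < N)%N),
     (g * (1 - v i * v i) + (1 - N%:R) * v i) / (v i * v i)
     = \sum_(j < N | j != Ordinal Hi) 2 / (v j - v i))
  i (Hi : (i < N)%N) : (Wp N g v).[v i] = 0.
Proof.
set i0 := Ordinal Hi.
set Rp := \prod_(j < N | j != i0) ('X - (v j)%:P).
have HQ : Qp N v = ('X - (v i)%:P) * Rp by rewrite /Qp (bigD1 i0).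
have Hne : forall j : 'I_N, j != i0 -> v i != v j.
  move=> j Hj; apply/eqP => E; apply: (Hdist j i) => //.
  by move=> E'; move: Hj; rewrite -(inj_eq val_inj) /= E' eqxx.
have HL := @logder _ (index_enum 'I_N) (fun j => j != i0) (fun j : 'I_N => v j) (v i) Hne.
rewrite -/Rp in HL.
set L := \sum_(j <- index_enum 'I_N | j != i0) (v i - v j)^-1 in HL.
have HS : \sum_(j < N | j != i0) 2 / (v j - v i) = - 2 * L.
  rewrite /L mulr_sumr; apply: eq_bigr => j Hj.
  have h1 : v i - v j != 0 by rewrite subr_eq0 Hne.
  have h2 : v j - v i != 0 by rewrite subr_eq0 eq_sym Hne.
  field. by rewrite h1 h2.
have HBi := HB i Hi. rewrite -/i0 HS in HBi.
rewrite Wp_horner /= HQ.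
rewrite d2 d1 !(hornerXsubC, hornerD, hornerMn, hornerM, hornerX, hornerN, subrr, mul0r, addr0, mulr0, mul1r, hornerC).
rewrite HL.
have HL2 : L = - ((g * (1 - v i * v i) + (1 - N%:R) * v i) / (v i * v i)) / 2.
  rewrite HBi. have := natC_neq0 1. move=> h2. field. exact h2.
rewrite HL2.
have hv : v i != 0 by apply/eqP; apply: Hnz.
have h2 : (2 : C) != 0 by exact: (natC_neq0 1).
field; by rewrite ?hv ?h2.
Qed.

Lemma Wp_zero N g v (HN : (1 <= N)%N)
  (Hdist : forall i j, (i < N)%N -> (j < N)%N -> i <> j -> v i <> v j)
  (Hnz : forall i, (i < N)%N -> v i <> 0)
  (HB : forall i (Hi : (i < N)%N),
     (g * (1 - v i * v i) + (1 - N%:R) * v i) / (v i * v i)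
     = \sum_(j < N | j != Ordinal Hi) 2 / (v j - v i)) :
  Wp N g v = 0.
Proof.
apply/eqP; apply: contraT => HW.
have Hr : all (root (Wp N g v)) [seq v i | i <- iota 0 N].
  apply/allP => x /mapP [i Hi ->]; rewrite mem_iota add0n in Hi.
  by rewrite /root (Wp_root Hdist Hnz HB Hi).
have Hu : uniq [seq v i | i <- iota 0 N].
  rewrite map_inj_in_uniq ?iota_uniq // => a b Ha Hb E.
  rewrite !mem_iota !add0n in Ha Hb.
  case: (eqVneq a b) => // /eqP Hab; exfalso; exact: (Hdist a b Ha Hb Hab E).
have := max_poly_roots HW Hr Hu.
rewrite size_map size_iota => H.
have := Wp_size g v HN. by rewrite leqNgt H.
Qed.

Lemma is_derive_expC x : is_derive (fun t => RtoC (exp t)) x (RtoC (exp x)).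
Proof. apply: is_derive_RtoC; apply/is_derive_Reals; exact: derivable_pt_lim_exp. Qed.

Lemma th_step (p : {poly C}) c z : (th (p * 'X + c%:P)).[z] = (th p).[z] * z + p.[z] * z.
Proof.
rewrite !hth derivD derivM derivX derivC addr0 mulr1 !hornerD !hornerM hornerX.
ring.
Qed.

Lemma is_derive_poly (p : {poly C}) x :
  is_derive (fun t => p.[RtoC (exp t)]) x ((th p).[RtoC (exp x)]).
Proof.
elim/poly_ind: p => [|p c IH].
  apply: (is_derive_ext (fun _ : R => (0 : C))).
    by move=> t; rewrite horner0.
  apply: is_derive_eqv; first exact: is_derive_Cconst.
  by rewrite /th deriv0 mulr0 horner0.
apply: (is_derive_ext (fun t => Cplus (Cmult (p.[RtoC (exp t)]) (RtoC (exp t))) c)).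
  by move=> t; rewrite hornerD hornerMX hornerC.
apply: is_derive_eqv.
  apply: is_derive_Cplus; last exact: is_derive_Cconst.
  apply: is_derive_Cmult; [exact: IH | exact: is_derive_expC].
rewrite th_step. change (Cplus _ (RtoC 0)) with ((th p).[RtoC (exp x)] * RtoC (exp x) + p.[RtoC (exp x)] * RtoC (exp x) + 0).
by rewrite addr0.
Qed.


Local Open Scope ring_scope.

Lemma csum_big n f : csum n f = \sum_(j < n) f j.
Proof. elim: n => [|n IH]; first by rewrite big_ord0. by rewrite big_ord_recr /= IH. Qed.
Lemma cprod_big n f : cprod n f = \prod_(j < n) f j.
Proof. elim: n => [|n IH]; first by rewrite big_ord0. by rewrite big_ord_recr /= IH. Qed.

Lemma RtoC_invA (r : R) : RtoC (Rinv r) = (RtoC r)^-1.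
Proof.
case: (Req_dec r (IZR 0)) => [->|H]; last exact: RtoC_invE.
by rewrite Rinv_0 invr0.
Qed.
Lemma RtoC_divE (a b : R) : RtoC (Rdiv a b) = RtoC a / RtoC b.
Proof. by rewrite /Rdiv RtoC_mulE RtoC_invA. Qed.
Lemma RtoC_powE (r : R) n : RtoC (pow r n) = (RtoC r) ^+ n.
Proof. elim: n => [//|n IH]. by rewrite /= RtoC_mulE IH exprS. Qed.
Lemma RtoC_IZRE (n : nat) : RtoC (IZR (Z.of_nat n)) = n%:R.
Proof. by rewrite -INR_IZR_INZ RtoC_natE. Qed.
Lemma RtoC_2E : RtoC (IZR 2) = 2%:R. Proof. exact: (RtoC_IZRE 2). Qed.
Lemma RtoC_8E : RtoC (IZR 8) = 8%:R. Proof. exact: (RtoC_IZRE 8). Qed.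

Lemma CplusE (a b : C) : Cplus a b = a + b. Proof. by []. Qed.
Lemma CmultE (a b : C) : Cmult a b = a * b. Proof. by []. Qed.
Lemma CoppE (a : C) : Copp a = - a. Proof. by []. Qed.
Lemma CminusE (a b : C) : Cminus a b = a - b. Proof. by []. Qed.
Lemma CdivE (a b : C) : Cdiv a b = a / b. Proof. by []. Qed.

Lemma psi_fact (x : R) (c : C) :
  Cminus (RtoC (exp (x / 2))) (Cmult c (RtoC (exp (- x / 2)))) =
  RtoC (exp (- x / 2)) * (RtoC (exp x) - c).
Proof. rewrite CminusE CmultE exp_half RtoC_mulE. ring. Qed.

Lemma psi_eq N gam v x : psi N gam v x = RtoC (Af N gam x) * (Qp N v).[RtoC (exp x)].
Proof.
rewrite /psi cprod_big Af_split RtoC_mulE RtoC_powE CmultE.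
rewrite /Qp horner_prod -mulrA; congr (_ * _).
have -> : RtoC (exp (- x / 2)) ^+ N = \prod_(j < N) RtoC (exp (- x / 2)) by rewrite prodr_const card_ord.
rewrite -big_split /=.
apply: eq_bigr => j _. by rewrite psi_fact hornerXsubC.
Qed.

Lemma is_derive_aQ (a a' : R -> R) (p : {poly C}) x :
  is_derive a x (a' x) ->
  is_derive (fun t => RtoC (a t) * p.[RtoC (exp t)]) x
    (RtoC (a' x) * p.[RtoC (exp x)] + RtoC (a x) * (th p).[RtoC (exp x)]).
Proof. move=> H. exact (is_derive_Cmult _ _ _ _ _ (is_derive_RtoC _ _ _ H) (is_derive_poly p x)). Qed.

Lemma RtoC_neq0 (r : R) : r <> IZR 0 -> RtoC r != 0.
Proof. move=> H; apply/eqP => E; apply: H; exact: (f_equal fst E). Qed.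

Lemma bethe_conv N k Ecal v (Hk : k <> IZR 0) (Hbethe : bethe_eqs N k Ecal v)
  (Hnz : forall i, (i < N)%N -> v i <> 0) :
  forall i (Hi : (i < N)%N),
     (RtoC Ecal / RtoC k * (1 - v i * v i) + (1 - N%:R) * v i) / (v i * v i)
     = \sum_(j < N | j != Ordinal Hi) 2 / (v j - v i).
Proof.
move=> i Hi.
have Hi' : Peano.lt i N by apply/ltP.
have := Hbethe i Hi'.
rewrite csum_big !CdivE !CplusE !CmultE !CminusE RtoC_mulE RtoC_subE RtoC_natE RtoC_2E.
move=> H.
have hk := RtoC_neq0 Hk.
have hv : v i != 0 by apply/eqP; apply: Hnz.
have E1 : (RtoC Ecal / RtoC k * (1 - v i * v i) + (1 - N%:R) * v i) / (v i * v i) =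
  (RtoC Ecal * (1 - v i * v i) + RtoC k * (1 - N%:R) * v i) / (RtoC k * (v i * v i)).
  field. by rewrite hk hv.
rewrite E1 H [RHS]big_mkcond; apply: eq_bigr => j _.
case: (eqVneq j (Ordinal Hi)) => [->|Hj] /=.
  by rewrite Nat.eqb_refl.
have -> : Nat.eqb j i = false.
  apply/Nat.eqb_neq => E; move: Hj; rewrite -(inj_eq val_inj) /= E eqxx //.
by [].
Qed.

Lemma final_identity N (k Ecal : R) v (Hk : k <> IZR 0) x
  (HW : Wp N (RtoC Ecal / RtoC k) v = 0) :
  let gam := Rdiv Ecal k in
  let Q := Qp N v in
  let z := RtoC (exp x) in
  Cplus (Copp ((RtoC (A2f N gam x) * Q.[z] + RtoC (A1f N gam x) * (th Q).[z]) +
               (RtoC (A1f N gam x) * (th Q).[z] + RtoC (Af N gam x) * (th (th Q)).[z])))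
        (Cmult (RtoC (pot N gam x)) (RtoC (Af N gam x) * Q.[z]))
  = Cmult (Cdiv (Cmult (RtoC (IZR 2)) (energy N k Ecal v)) (RtoC k)) (RtoC (Af N gam x) * Q.[z]).
Proof.
move=> gam Q z.
have hk := RtoC_neq0 Hk.
have hz : z != 0 by apply: RtoC_neq0; have := exp_pos x; lra.
have HWz := f_equal (fun p => p.[z]) HW; rewrite /= Wp_horner horner0 /= in HWz.
rewrite -/Q !CdivE in HWz.
set q0 := Q.[z] in HWz *. set q1 := Q^`().[z] in HWz *. set q2 := Q^`()^`().[z] in HWz *.
have E : (q2 = (- (z * q1) + z * q1 *+ N + RtoC Ecal / RtoC k * (z * (z * q1))
   - RtoC Ecal / RtoC k * q1 - RtoC Ecal / RtoC k * (z * q0) *+ N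
   - RtoC Ecal / RtoC k * Ssum N v * q0) / (z * z))%R.
  apply: (@mulIf _ (z * z)); first by rewrite mulf_neq0.
  rewrite divfK ?mulf_neq0 //.
  apply/eqP; rewrite -subr_eq0; apply/eqP; rewrite -[RHS]oppr0 -HWz; ring.
rewrite !(CplusE, CoppE, CmultE, CdivE).
rewrite (hthth Q z) (hth Q z) -/q1 -/q2 E.
rewrite /A2f /A1f /bf /bpf /pot /energy /sinh /cosh /gam csum_big -/(Ssum N v).
rewrite !(CplusE, CoppE, CmultE, CdivE).
rewrite !(RtoC_mulE, RtoC_addE, RtoC_subE, RtoC_oppE, RtoC_divE, RtoC_invA, RtoC_natE,
  RtoC_2E, RtoC_8E, RtoC_powE, RtoC_1E, exp_Ropp).
rewrite -/z.
field. by rewrite hk hz (natC_neq0 1) (natC_neq0 7).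
Qed.

Close Scope ring_scope.
Open Scope R_scope.

Unset Implicit Arguments.

Theorem mainTheorem5 (N : nat) (k Ecal : R) (v : nat -> C)
  (HN : Peano.le 1 N) (Hk : 0 < k) (HE : 0 < Ecal)
  (Hdist : forall i j, Peano.lt i N -> Peano.lt j N -> i <> j -> v i <> v j)
  (Hnz : forall i, Peano.lt i N -> v i <> RtoC 0)
  (Hbethe : bethe_eqs N k Ecal v) :
  let gam := Ecal / k in
  exists psi1 psi2 : R -> C,
    (forall x : R, is_derive (psi N gam v) x (psi1 x)) /\
    (forall x : R, is_derive psi1 x (psi2 x)) /\
    (forall x : R,
       Cplus (Copp (psi2 x)) (Cmult (RtoC (pot N gam x)) (psi N gam v x))
       = Cmult (Cdiv (Cmult (RtoC 2) (energy N k Ecal v)) (RtoC k)) (psi N gam v x)).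
Proof.
move=> gam.
have Hk0 : k <> IZR 0 by lra.
have Hnz' : forall i, (i < N)%N -> v i <> (0 : C)%R.
  by move=> i /ltP Hi; apply: Hnz.
have Hdist' : forall i j, (i < N)%N -> (j < N)%N -> i <> j -> v i <> v j.
  by move=> i j /ltP Hi /ltP Hj; apply: Hdist.
have HW := Wp_zero (g := (RtoC Ecal / RtoC k)%R) (introT leP HN) Hdist' Hnz' (bethe_conv Hk0 Hbethe Hnz').
set Q := Qp N v.
exists (fun x => (RtoC (A1f N gam x) * Q.[RtoC (exp x)] + RtoC (Af N gam x) * (th Q).[RtoC (exp x)])%R).
exists (fun x => ((RtoC (A2f N gam x) * Q.[RtoC (exp x)] + RtoC (A1f N gam x) * (th Q).[RtoC (exp x)]) +
               (RtoC (A1f N gam x) * (th Q).[RtoC (exp x)] + RtoC (Af N gam x) * (th (th Q)).[RtoC (exp x)]))%R).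
split; [|split].
- move=> x.
  apply: (is_derive_ext (fun t => (RtoC (Af N gam t) * Q.[RtoC (exp t)])%R)).
    by move=> t; rewrite psi_eq.
  exact: (is_derive_aQ Q (Af_der N gam x)).
- move=> x. apply: is_derive_Cplus.
  + exact: (is_derive_aQ Q (A1f_der N gam x)).
  + exact: (is_derive_aQ (th Q) (Af_der N gam x)).
- move=> x. rewrite psi_eq. exact (@final_identity N k Ecal v Hk0 x HW).
Qed.
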